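(* Let $M$ be a right $R$-module, $D$ a direct summand of $M$ and $X$ a cyclic submodule of $M$ such that $X\,\beta^*\,D$ in $M$. Then $D$ is cyclic.
   Context: $R$ is an associative ring with identity; modules are unital right $R$-modules. $K\ll N$ means $K$ is small in $N$ ($K+L=N$ implies $L=N$). For submodules $X,Y$ of $M$, $X\,\beta^*\,Y$ means $(X+Y)/X\ll M/X$ and $(X+Y)/Y\ll M/Y$. *)

(* Defs.v *)
(* Right R-modules are modelled as left modules over the
   converse ring R^c: the right action m.r is written r *: m. *)
From HB Require Import structures.
From mathcomp Require Import all_boot all_order all_algebra.
Set Implicit Arguments. Unset Strict Implicit. Unset Printing Implicit Defensive.
Import GRing.Theory.
Local Open Scope ring_scope.

Section Modules.
Variables (R : pzRingType) (M : lmodType R^c).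

Definition submod (X : M -> Prop) : Prop :=
  [/\ X 0, (forall x y, X x -> X y -> X (x + y))
    & (forall (r : R^c) x, X x -> X (r *: x))].

Definition subm_incl (X Y : M -> Prop) : Prop := forall m, X m -> Y m.
Definition subm_eq (X Y : M -> Prop) : Prop := forall m, X m <-> Y m.
Definition subm_add (X Y : M -> Prop) : M -> Prop :=
  fun m => exists x y, [/\ X x, Y y & m = x + y].
Definition subm_cap (X Y : M -> Prop) : M -> Prop := fun m => X m /\ Y m.
Definition subm_full : M -> Prop := fun _ => True.
Definition subm_zero : M -> Prop := fun m => m = 0.

Definition small_in (K N : M -> Prop) : Prop :=
  forall L, submod L -> subm_incl L N ->
    subm_eq (subm_add K L) N -> subm_eq L N.

(* (X+Y)/X << M/X, expressed through the lattice isomorphism between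
   submodules of M/X and submodules of M containing X:
   for every submodule L of M with X <= L, (X+Y)+L = M implies L = M. *)
Definition small_quot (X Y : M -> Prop) : Prop :=
  forall L, submod L -> subm_incl X L ->
    subm_eq (subm_add (subm_add X Y) L) subm_full -> subm_eq L subm_full.

Definition beta_star (X Y : M -> Prop) : Prop :=
  small_quot X Y /\ small_quot Y X.

Definition direct_summand (D : M -> Prop) : Prop :=
  exists D', [/\ submod D', subm_eq (subm_add D D') subm_full
                & subm_eq (subm_cap D D') subm_zero].

Definition cyclic_submod (X : M -> Prop) : Prop :=
  exists m : M, subm_eq X (fun y => exists r : R^c, y = r *: m).

End Modules.

(* Main.v *)
Require Import Defs.
From HB Require Import structures.
From mathcomp Require Import all_boot all_order all_algebra.
Import GRing.Theory.
Local Open Scope ring_scope.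

Theorem lemma2p4 (R : pzRingType) (M : lmodType R^c) (D X : M -> Prop) :
  submod D -> direct_summand D ->
  submod X -> cyclic_submod X ->
  beta_star X D ->
  cyclic_submod D.
Proof.
move=> [D0 DD DZ] [D' [[E0 ED EZ] Hsum Hcap]] [X0 XD XZ] [m Hm] [HXD _].
have Xm : X m by apply/Hm; exists 1; rewrite scale1r.
have [a [b [Da Db Eab]]] := proj2 (Hsum m) I.
pose L := subm_add X D'.
have subL : submod L.
  split.
  - by exists 0, 0; split => //; rewrite addr0.
  - move=> x y [x1 [y1 [Hx1 Hy1 ->]]] [x2 [y2 [Hx2 Hy2 ->]]].
    exists (x1 + x2), (y1 + y2); split; [exact: XD|exact: ED|].
    by rewrite addrACA.
  - move=> r x [x1 [y1 [Hx1 Hy1 ->]]].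
    by exists (r *: x1), (r *: y1); split; [exact: XZ|exact: EZ|rewrite scalerDr].
have XL : subm_incl X L by move=> x Hx; exists x, 0; split => //; rewrite addr0.
have HL : subm_eq L (@subm_full R M).
  apply: HXD => // z; split => // _.
  have [d [d' [Hd Hd' ->]]] := proj2 (Hsum z) I.
  exists (0 + d), (0 + d'); split.
  - by exists 0, d; split.
  - by exists 0, d'; split.
  - by rewrite !add0r.
exists a => d; split.
- move=> Hd.
  have [x [y [Hx Hy Edy]]] := proj2 (HL d) I.
  have [r Er] := proj1 (Hm x) Hx.
  exists r.
  have Hdiff : d - r *: a = r *: b + y.
    by rewrite Edy Er Eab scalerDr addrC !addrA addNr add0r.
  have Dd : D (d - r *: a).
    apply: DD => //; rewrite -scaleN1r; exact: (DZ _ _ (DZ _ _ Da)).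
  have Ed : D' (d - r *: a) by rewrite Hdiff; exact: (ED _ _ (EZ _ _ Db) Hy).
  have /Hcap : subm_cap D D' (d - r *: a) by [].
  by move/eqP; rewrite subr_eq0 => /eqP.
- by move=> [r ->]; exact: DZ.
Qed.
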